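(* Let $G$ be a connected cograph which is $k$-connected, and let $S$ be a minimal vertex separator of $G$ with $|S|=k$. Then every edge $\{u,v\}$ of $G\setminus S$ is universal to $S$, i.e. for every $s\in S$, $\{u,s\}\in E(G)$ or $\{v,s\}\in E(G)$.
   Context: A cograph is a graph that can be built from single vertices by repeatedly taking disjoint unions and joins; equivalently, a graph with no induced path on four vertices. $G\setminus S$ is the subgraph induced on $V(G)\setminus S$. A vertex separator of a connected graph $G$ is a set $S\subset V(G)$ such that $G\setminus S$ is disconnected; it is minimal if no proper subset of $S$ is a vertex separator; a minimum vertex separator is a minimal vertex separator of least size. The paper calls $G$ $k$-connected if there exists a minimum vertex separator of size $k$. *)

(* Defs.v *)
(* A finite simple graph is a symmetric irreflexive relation
   e : rel T on a finType T (vertex set = all of T). *)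
From mathcomp Require Import all_boot.
Set Implicit Arguments. Unset Strict Implicit. Unset Printing Implicit Defensive.

Section Graphs.
Variables (T : finType) (e : rel T).

Definition induced_rel (A : {set T}) : rel T :=
  [rel x y | [&& x \in A, y \in A & e x y]].

Definition connected_on (A : {set T}) : Prop :=
  forall x y, x \in A -> y \in A -> connect (induced_rel A) x y.

Definition graph_connected : Prop := connected_on setT.

Definition vertex_separator (S : {set T}) : Prop := ~ connected_on (~: S).

Definition minimal_vertex_separator (S : {set T}) : Prop :=
  vertex_separator S /\ forall S' : {set T}, S' \proper S -> ~ vertex_separator S'.

Definition minimum_vertex_separator (S : {set T}) : Prop :=
  minimal_vertex_separator S /\
  forall S' : {set T}, minimal_vertex_separator S' -> #|S| <= #|S'|.

(* the paper's "k-connected": there is a minimum vertex separator of size k *)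
Definition k_connected (k : nat) : Prop :=
  exists S, minimum_vertex_separator S /\ #|S| = k.

Definition induced_P4 (a b c d : T) : Prop :=
  uniq [:: a; b; c; d] /\ e a b /\ e b c /\ e c d /\
  ~~ e a c /\ ~~ e a d /\ ~~ e b d.

Definition cograph : Prop := forall a b c d, ~ induced_P4 a b c d.

End Graphs.

(* Main.v *)
Require Import Defs.
From mathcomp Require Import all_boot.
Set Implicit Arguments. Unset Strict Implicit.

Lemma conn_closed (T : finType) (r : rel T) (A : pred T) x z :
  (forall y w, A y -> r y w -> A w) -> connect r x z -> A x -> A z.
Proof.
move=> H /connectP [p Hp ->]; elim: p x Hp => [|y p IH] x //= /andP [rxy Hp] Ax.
by apply: IH Hp _; exact: H Ax rxy.
Qed.

Lemma conn_switch (T : finType) (r : rel T) (P : pred T) u y :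
  connect r u y -> ~~ P u -> P y ->
  exists x w, [/\ connect r u x, r x w, ~~ P x & P w].
Proof.
move=> /connectP [p Hp ->]; elim: p u Hp => [|a p IH] u /=.
  by move=> _ /negPf ->.
move=> /andP [rua Hp] Pu Pl.
case Pa: (P a).
  by exists u, a; split => //; exact: connect0.
have [x [w [c1 c2 c3 c4]]] := IH a Hp (negbT Pa) Pl.
exists x, w; split => //; exact: connect_trans (connect1 rua) c1.
Qed.

Theorem corollary1 (T : finType) (e : rel T)
    (e_sym : symmetric e) (e_irr : irreflexive e)
    (Hco : cograph e) (Hconn : graph_connected e)
    (k : nat) (Hk : k_connected e k)
    (S : {set T}) (HS : minimal_vertex_separator e S) (HSk : #|S| = k) :
  forall u v, u \notin S -> v \notin S -> e u v ->
    forall s, s \in S -> e u s || e v s.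
Proof.
move=> u v Hu Hv Huv s Hs.
apply/orP; left; apply: contraT => Hus.
set r := induced_rel e (~: S).
have rsym : symmetric r.
  by move=> x y; rewrite /r /induced_rel /= e_sym; case: (x \in _); case: (y \in _).
have csym := sym_connect_sym rsym.
have notS : forall x y, connect r x y -> x \notin S -> y \notin S.
  move=> x y c hx; apply: (conn_closed (A := [pred z | z \notin S])) c hx.
  by move=> y0 w _ /=; rewrite /r /induced_rel /= !in_setC => /and3P [].
case: HS => Hsep Hmin.
have LA : forall x, x \notin S -> exists2 y, connect r x y & e s y.
  move=> x hx.
  case: (boolP [exists y, connect r x y && e s y]).
    by move/existsP => [y /andP [c1 c2]]; exists y.
  move=> H.
  have H' : forall y, connect r x y -> ~~ e s y.
    move=> y c; apply/negP => es; move/negP: H; apply; apply/existsP; exists y.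
    by rewrite c es.
  exfalso; apply: (Hmin (S :\ s)); first exact: properD1.
  move=> Hc; apply: Hsep => a b ha hb.
  apply: contraT => nab; rewrite -/r in nab.
  have [z hz nxz] : exists2 z, z \in ~: S & ~~ connect r x z.
    case cxa: (connect r x a); last by exists a; rewrite ?cxa.
    case cxb: (connect r x b); last by exists b; rewrite ?cxb.
    have cax : connect r a x by rewrite csym.
    by rewrite (connect_trans cax cxb) in nab.
  have hx' : x \in ~: (S :\ s) by rewrite in_setC in_setD1 (negbTE hx) andbF.
  have hz' : z \in ~: (S :\ s).
    by rewrite in_setC in_setD1; rewrite in_setC in hz; rewrite (negbTE hz) andbF.
  have := Hc x z hx' hz'.
  move/(conn_closed (A := [pred y | connect r x y])).
  rewrite /= connect0 (negbTE nxz); apply => // y w cxy.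
  rewrite /induced_rel /= !in_setC !in_setD1 => /and3P [_ hw eyw].
  have hy : y \notin S := notS _ _ cxy hx.
  have ws : w != s.
    apply/negP => /eqP ws; subst w.
    by have := H' y cxy; rewrite e_sym eyw.
  have hw' : w \notin S by move: hw; rewrite ws.
  apply: connect_trans cxy (connect1 _).
  by rewrite /r /induced_rel /= !in_setC hy hw' eyw.
have : ~~ [forall x, forall y, (x \in ~: S) ==> (y \in ~: S) ==> connect r x y].
  apply/negP => /forallP H; apply: Hsep => x y hx hy.
  by move/forallP: (H x) => /(_ y); rewrite hx hy.
case/forallPn => a /forallPn [b]; rewrite !negb_imply => /and3P [ha hb nab].
have [z hz nuz] : exists2 z, z \in ~: S & ~~ connect r u z.
  case cxa: (connect r u a); last by exists a; rewrite ?cxa.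
  case cxb: (connect r u b); last by exists b; rewrite ?cxb.
  have cax : connect r a u by rewrite csym.
  by rewrite (connect_trans cax cxb) in nab.
have hz' : z \notin S by rewrite in_setC in hz.
have [t czt est] := LA z hz'.
have ht : t \notin S := notS _ _ czt hz'.
have nut : ~~ connect r u t.
  apply/negP => cut; move/negP: nuz; apply.
  by apply: connect_trans cut _; rewrite csym.
have [y cuy esy] := LA u Hu.
have nsu : ~~ e s u by rewrite e_sym.
have [x [w [cux rxw nsx esw]]] := conn_switch cuy nsu esy.
have hx : x \notin S := notS _ _ cux Hu.
have cuw : connect r u w := connect_trans cux (connect1 rxw).
have hw : w \notin S := notS _ _ cuw Hu.
have exw : e x w by move: rxw; rewrite /r /induced_rel /= => /and3P [].
have nxt : ~~ e x t.
  apply/negP => ext; move/negP: nut; apply; apply: connect_trans cux (connect1 _).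
  by rewrite /r /induced_rel /= !in_setC hx ht ext.
have nwt : ~~ e w t.
  apply/negP => ewt; move/negP: nut; apply; apply: connect_trans cuw (connect1 _).
  by rewrite /r /induced_rel /= !in_setC hw ht ewt.
have dxw : (x == w) = false by apply/negP => /eqP xw; subst w; rewrite e_irr in exw.
have dxs : (x == s) = false by apply/negP => /eqP xs; subst x; rewrite Hs in hx.
have dws : (w == s) = false by apply/negP => /eqP xs; subst w; rewrite Hs in hw.
have dst : (s == t) = false by apply/negP => /eqP xs; subst t; rewrite Hs in ht.
have dxt : (x == t) = false by apply/negP => /eqP xs; subst t; rewrite cux in nut.
have dwt : (w == t) = false by apply/negP => /eqP xs; subst t; rewrite cuw in nut.
exfalso; apply: (Hco x w s t); split.
  by rewrite /= !inE dxw dxs dxt dws dwt dst.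
split => //; split; first by rewrite e_sym.
split => //; split; first by rewrite e_sym.
by split.
Qed.
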